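(* Let $x\in\mathbb{R}_+^n$ and let $\mathrm{IC}(\mathbf{a}_0,\dots,\mathbf{a}_{n-1})$ be an interval circulant matrix. Then $x\in\mathrm{Attr}(A)$ for all $A\in\mathrm{IC}(\mathbf{a}_0,\dots,\mathbf{a}_{n-1})$ if and only if $x\in\mathrm{Attr}(A^{(k)})$ for each $k\in\{0,\dots,n-1\}$.
   Context: Max algebra on $\mathbb{R}_+$: $\oplus=\max$, ordinary product; $\lambda(A)$ greatest max-algebraic eigenvalue (maximum cycle geometric mean); $\mathrm{Attr}(A)=\{x\in\mathbb{R}_+^n: A^{t+1}\otimes x=\lambda(A)A^t\otimes x\text{ for some }t\ge0\}$. $\mathrm{Circ}(a_0,\dots,a_{n-1})$ has entries $A_{i,j}=a_t$, $t\equiv j-i\pmod n$; $\mathrm{IC}(\mathbf{a}_0,\dots,\mathbf{a}_{n-1})$ is the set of all $\mathrm{Circ}(a_0,\dots,a_{n-1})$ with $a_t\in\mathbf{a}_t$, each $\mathbf{a}_t\subseteq\mathbb{R}_+$ a nonempty interval of one of the forms $[\underline{a}_t,\overline{a}_t]$, $(\underline{a}_t,\overline{a}_t)$, $(\underline{a}_t,\overline{a}_t]$, $[\underline{a}_t,\overline{a}_t)$. $A^{(k)}=\mathrm{Circ}(\underline{a}_0,\dots,\underline{a}_{k-1},\overline{a}_k,\underline{a}_{k+1},\dots,\underline{a}_{n-1})$. *)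

(* Defs.v *)
From HB Require Import structures.
From mathcomp Require Import all_boot all_order all_algebra.
Set Implicit Arguments. Unset Strict Implicit. Unset Printing Implicit Defensive.
Import Order.TTheory GRing.Theory Num.Theory.
Local Open Scope ring_scope.

Section MaxAlg.
Variable R : rcfType.

Fact rootr_subproof (k : nat) (x : R) :
  exists y : R, (0 <= y) && (if 0 <= x then y ^+ k.+1 == x else y == 0).
Proof.
case x_ge0: (0 <= x); last by exists 0; rewrite lexx eqxx.
have le0x1: 0 <= x + 1 by rewrite addr_ge0.
have [|y /andP[y_ge0 _]] := @poly_ivt R ('X ^+ k.+1 - x%:P) 0 (x + 1) le0x1.
  rewrite !hornerE expr0n /= sub0r oppr_le0 x_ge0 /= subr_ge0.
  have h1 : 1 <= x + 1 by rewrite lerDr.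
  have h3 : x + 1 <= (x + 1) ^+ k.+1.
    have := exprn_ege1 k h1; rewrite exprS => h2.
    by apply: (le_trans _ (ler_wpM2l le0x1 h2)); rewrite mulr1.
  by apply: le_trans h3; rewrite lerDl.
rewrite rootE !hornerE subr_eq0 => hy; exists y; by rewrite y_ge0.
Qed.

(* rootr k x = the nonnegative (k+1)-th root of x (0 if x < 0) *)
Definition rootr (k : nat) (x : R) : R := xchoose (rootr_subproof k x).

Definition mmul n (A B : 'M[R]_n) : 'M[R]_n :=
  \matrix_(i, j) \big[Num.max/0]_(l < n) (A i l * B l j).
Definition mmulv n (A : 'M[R]_n) (x : 'cV[R]_n) : 'cV[R]_n :=
  \col_i \big[Num.max/0]_(j < n) (A i j * x j 0).
Definition mpow n (A : 'M[R]_n) (t : nat) : 'M[R]_n := iter t (mmul A) 1%:M.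

(* lambda(A): maximum cycle geometric mean, cycles = sequences of pairwise
   distinct indices i_0,...,i_k (length k+1 <= n), closed cyclically. *)
Definition lambda n (A : 'M[R]_n) : R :=
  \big[Num.max/0]_(k < n)
    \big[Num.max/0]_(s : (k.+1).-tuple 'I_n | uniq s)
      rootr k (\prod_(i < k.+1) A (tnth s i) (tnth s (ordS i))).

Definition Attr n (A : 'M[R]_n) (x : 'cV[R]_n) : Prop :=
  (forall i, 0 <= x i 0) /\
  exists t : nat, mmulv (mpow A t.+1) x = lambda A *: mmulv (mpow A t) x.

Definition Circ n (a : nat -> R) : 'M[R]_n :=
  \matrix_(i < n, j < n) a ((j + n - i) %% n)%N.

Definition in_intv (lo hi : R) (lc rc : bool) (a : R) : bool :=
  (if lc then lo <= a else lo < a) && (if rc then a <= hi else a < hi).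

Definition Ak n (lo hi : nat -> R) (k : nat) : 'M[R]_n :=
  Circ n (fun t => if t == k then hi t else lo t).

End MaxAlg.

(* Main.v *)
Require Import Defs.
From HB Require Import structures.
From mathcomp Require Import all_boot all_order all_algebra.
From mathcomp Require Import zify ring lra.
Set Implicit Arguments. Unset Strict Implicit. Unset Printing Implicit Defensive.
Import Order.TTheory GRing.Theory Num.Theory.
Local Open Scope ring_scope.

(* Proof sketch: circulant max-algebra matrices are handled in
   the max-times semiring of nonnegative reals (type nn); eventual periodicity
   A^(N+1) = a_k P^k A^N for N >= n(n-1)+1 gives a characterization of Attr,
   a monotonicity argument gives RHS -> LHS, and a continuity (Lipschitz)
   argument gives LHS -> RHS. *)

Section NN.
Variable R : rcfType.
Record nn := NN { nnv :> R; nnp : 0 <= nnv }.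
HB.instance Definition _ := [isSub for nnv].
HB.instance Definition _ := [Choice of nn by <:].
Definition nn0 := @NN 0 (lexx 0).
Definition nn1 := @NN 1 ler01.
Lemma nnadd_ge0 (x y : nn) : 0 <= Num.max (nnv x) (nnv y).
Proof. by rewrite le_max nnp. Qed.
Definition nnadd (x y : nn) := @NN (Num.max (nnv x) (nnv y)) (nnadd_ge0 x y).
Lemma nnmul_ge0 (x y : nn) : 0 <= nnv x * nnv y.
Proof. by rewrite mulr_ge0 // nnp. Qed.
Definition nnmul (x y : nn) := @NN (nnv x * nnv y) (nnmul_ge0 x y).
Lemma nnaddA : associative nnadd.
Proof. by move=> x y z; apply: val_inj; rewrite /= maxA. Qed.
Lemma nnaddC : commutative nnadd.
Proof. by move=> x y; apply: val_inj; rewrite /= maxC. Qed.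
Lemma nnadd0 : left_id nn0 nnadd.
Proof. by move=> x; apply: val_inj; rewrite /= max_r // nnp. Qed.
HB.instance Definition _ := GRing.isNmodule.Build nn nnaddA nnaddC nnadd0.
Lemma nnmulA : associative nnmul.
Proof. by move=> x y z; apply: val_inj; rewrite /= mulrA. Qed.
Lemma nnmulC : commutative nnmul.
Proof. by move=> x y; apply: val_inj; rewrite /= mulrC. Qed.
Lemma nnmul1 : left_id nn1 nnmul.
Proof. by move=> x; apply: val_inj; rewrite /= mul1r. Qed.
Lemma nnmulDl : left_distributive nnmul nnadd.
Proof. move=> x y z; apply: val_inj; rewrite /= maxr_pMl // nnp //. Qed.
Lemma nnmul0 : left_zero nn0 nnmul.
Proof. by move=> x; apply: val_inj; rewrite /= mul0r. Qed.
Lemma nn1_neq0 : nn1 != nn0.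
Proof. by apply/eqP => /(congr1 val) /= /eqP; rewrite oner_eq0. Qed.
HB.instance Definition _ := GRing.Nmodule_isComNzSemiRing.Build nn nnmulA nnmulC nnmul1 nnmulDl nnmul0 nn1_neq0.
Lemma nnD (x y : nn) : nnv (x + y) = Num.max (nnv x) (nnv y). Proof. by []. Qed.
Lemma nnM (x y : nn) : nnv (x * y) = nnv x * nnv y. Proof. by []. Qed.
Lemma nn0E : nnv (0 : nn) = 0. Proof. by []. Qed.
Lemma nn1E : nnv (1 : nn) = 1. Proof. by []. Qed.
Lemma nn_inj (x y : nn) : nnv x = nnv y -> x = y.
Proof. exact: val_inj. Qed.
Lemma nnX (x : nn) m : nnv (x ^+ m) = nnv x ^+ m.
Proof. by elim: m => [|m IH] //; rewrite !exprS nnM IH. Qed.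
Lemma nn_idem (x : nn) : x + x = x.
Proof. by apply: nn_inj; rewrite nnD maxxx. Qed.
Lemma nn_leeP (x y : nn) : x + y = y <-> nnv x <= nnv y.
Proof.
split=> [<-|h]; first by rewrite nnD le_max lexx.
by apply: nn_inj; rewrite nnD max_r.
Qed.
Lemma mx_idem m1 m2 (A : 'M[nn]_(m1, m2)) : A + A = A.
Proof. by apply/matrixP => i j; rewrite mxE nn_idem. Qed.
End NN.

Section Idem.
Variable T : pzSemiRingType.
Hypothesis idem : forall x : T, x + x = x.
Definition lee (x y : T) := x + y = y.
Lemma lee_refl x : lee x x. Proof. exact: idem. Qed.
Lemma lee_trans y x z : lee x y -> lee y z -> lee x z.
Proof. by rewrite /lee => h1 h2; rewrite -h2 addrA h1. Qed.
Lemma lee_addl x y : lee x (x + y). Proof. by rewrite /lee addrA idem. Qed.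
Lemma lee_addr x y : lee y (x + y). Proof. by rewrite /lee addrCA idem. Qed.
Lemma lee_add2 x y z : lee x z -> lee y z -> lee (x + y) z.
Proof. by rewrite /lee => h1 h2; rewrite -addrA h2 h1. Qed.
Lemma lee_add x y x' y' : lee x x' -> lee y y' -> lee (x + y) (x' + y').
Proof.
move=> h1 h2; apply: lee_add2.
  by apply: lee_trans h1 _; apply: lee_addl.
by apply: lee_trans h2 _; apply: lee_addr.
Qed.
Lemma lee_mull z x y : lee x y -> lee (z * x) (z * y).
Proof. by rewrite /lee => h; rewrite -mulrDr h. Qed.
Lemma lee_mulr z x y : lee x y -> lee (x * z) (y * z).
Proof. by rewrite /lee => h; rewrite -mulrDl h. Qed.
Lemma lee_mul x y x' y' : lee x x' -> lee y y' -> lee (x * y) (x' * y').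
Proof. by move=> h1 h2; apply: lee_trans (lee_mulr _ h1) (lee_mull _ h2). Qed.
Lemma lee_anti x y : lee x y -> lee y x -> x = y.
Proof. by rewrite /lee => h1 h2; rewrite -h1 addrC h2. Qed.
Lemma lee_expn x y m : lee x y -> lee (x ^+ m) (y ^+ m).
Proof.
move=> h; elim: m => [|m IH]; first by rewrite !expr0; apply: lee_refl.
by rewrite !exprS; apply: lee_mul.
Qed.
Lemma lee_sum (I : eqType) (s : seq I) (F : I -> T) i : i \in s -> lee (F i) (\sum_(j <- s) F j).
Proof.
elim: s => [|y s IH] //; rewrite inE big_cons => /orP[/eqP->|/IH h].
  exact: lee_addl.
by apply: lee_trans h _; apply: lee_addr.
Qed.
Lemma lee_sum2 (I : Type) (s : seq I) (F G : I -> T) :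
  (forall i, lee (F i) (G i)) -> lee (\sum_(j <- s) F j) (\sum_(j <- s) G j).
Proof.
move=> h; elim: s => [|y s IH]; first by rewrite !big_nil; apply: lee_refl.
by rewrite !big_cons; apply: lee_add.
Qed.

Lemma lee_C (X Y : T) : GRing.comm X Y -> forall p q,
  lee ((X + Y) ^+ (p + q).+1)
      (X ^+ p.+1 * (X + Y) ^+ q + Y ^+ q.+1 * (X + Y) ^+ p).
Proof.
move=> cXY.
suff: forall m p q, (p + q)%N = m ->
  lee ((X + Y) ^+ m.+1) (X ^+ p.+1 * (X + Y) ^+ q + Y ^+ q.+1 * (X + Y) ^+ p).
  by move=> H p q; apply: H.
elim=> [|m IH] p q.
  by case: p q => [|?] [|?] // _; rewrite !expr1 !expr0 !mulr1; apply: lee_refl.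
move=> hpq; rewrite exprS mulrDl; apply: lee_add2.
- case: p hpq => [|p] hpq.
    rewrite add0n in hpq; rewrite -hpq expr1; exact: lee_addl.
  have := IH p q; rewrite addSn in hpq; case: hpq => hpq.
  move/(_ hpq)/(lee_mull X); rewrite mulrDr mulrA -exprS => h.
  apply: lee_trans h _; apply: lee_add; first exact: lee_refl.
  rewrite mulrA (commrX q.+1 cXY) -mulrA; apply: lee_mull.
  rewrite [_ ^+ p.+1]exprS; apply: lee_mulr; exact: lee_addl.
- case: q hpq => [|q] hpq.
    rewrite addn0 in hpq; rewrite -hpq expr1; exact: lee_addr.
  have := IH p q; rewrite addnS in hpq; case: hpq => hpq.
  move/(_ hpq)/(lee_mull Y); rewrite mulrDr [Y * (Y ^+ _ * _)]mulrA -exprS => h.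
  apply: lee_trans h _; apply: lee_add; last exact: lee_refl.
  have cYX : GRing.comm Y (X ^+ p.+1) by apply: commrX; exact/esym.
  rewrite mulrA cYX -mulrA; apply: lee_mull.
  rewrite [_ ^+ q.+1]exprS; apply: lee_mulr; exact: lee_addr.
Qed.

Lemma lee_core (s : seq T) q z : s != [::] ->
  (forall x y, x \in s -> y \in s -> GRing.comm x y) ->
  (forall x, x \in s -> lee (x ^+ q.+1) z) ->
  lee ((\sum_(x <- s) x) ^+ (size s * q).+1)
      (z * (\sum_(x <- s) x) ^+ (size s * q - q)).
Proof.
elim: s => [|y s IH] // _ hc hz.
case: s IH hc hz => [|y' s] IH hc hz.
  rewrite big_cons big_nil addr0 /= mul1n subnn expr0 mulr1.
  by apply: hz; rewrite inE eqxx.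
set s' := y' :: s in IH hc hz *.
have sub : forall x, x \in s' -> x \in y :: s' by move=> x hx; rewrite inE hx orbT.
have IH' := IH isT (fun x y hx hy => hc x y (sub _ hx) (sub _ hy))
  (fun x hx => hz x (sub _ hx)).
set X := \sum_(x <- s') x in IH' *.
rewrite big_cons -/X [y + X]addrC.
have cXy : GRing.comm X y.
  rewrite /X big_seq; apply/esym/commr_sum => i hi; apply: hc; by rewrite inE ?eqxx ?hi ?orbT.
set p := (size s' * q)%N in IH' *.
have hpq : (q <= p)%N by rewrite /p leq_pmull.
have -> : (size (y :: s') * q)%N = (p + q)%N by rewrite /= mulSn addnC.
have -> : (p + q - q)%N = p by rewrite addnK.
apply: lee_trans (lee_C cXy p q) _.
rewrite -[X in lee _ X]idem; apply: lee_add.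
- apply: lee_trans (lee_mulr _ IH') _.
  rewrite -mulrA; apply: lee_mull.
  rewrite -[in X in lee _ X](subnK hpq) exprD; apply: lee_mulr.
  apply: lee_expn; exact: lee_addl.
- apply: lee_mulr; apply: hz; by rewrite inE eqxx.
Qed.
End Idem.


Section CircS.
Variable R : rcfType.
Variable n : nat.
Local Notation S := (nn R).
Local Notation I := 'I_n.+1.
Local Notation MM := 'M[S]_n.+1.

Let idm := @mx_idem R n.+1 n.+1.
Definition Qm (t : I) : MM := \matrix_(i, j) (if j - i == t then 1 else 0).
Definition sc (c : S) : MM := c%:M.

Lemma mulE (A B : MM) : A * B = A *m B. Proof. by rewrite mulmxE. Qed.

Lemma QmM t u : Qm t * Qm u = Qm (t + u).
Proof.
apply/matrixP => i j; rewrite mulE !mxE (bigD1 (i + t)) //= big1 => [|l hl].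
  rewrite !mxE [i + t]addrC addrK eqxx mul1r addr0 opprD addrA subr_eq. by rewrite [_ - t == _]subr_eq [_ - i == _]subr_eq [u + i + t]addrC addrA.
rewrite !mxE; case: eqP => [h|_]; last by rewrite mul0r.
by move: hl; rewrite -h addrC subrK eqxx.
Qed.

Lemma Qm0 : Qm 0 = 1.
Proof.
apply/matrixP => i j; rewrite !mxE subr_eq0 eq_sym.
by case: eqP.
Qed.

Lemma QmX t m : Qm t ^+ m = Qm (t *+ m).
Proof. elim: m => [|m IH]; first by rewrite expr0 mulr0n Qm0. by rewrite exprS IH QmM mulrS. Qed.

Lemma mulrn_order (t : I) : t *+ n.+1 = 0.
Proof. by rewrite Zp_mulrn; apply: val_inj; rewrite /= modnMl. Qed.

Lemma Qm_order t : Qm t ^+ n.+1 = 1.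
Proof. by rewrite QmX mulrn_order Qm0. Qed.

Lemma Qm_comm t u : GRing.comm (Qm t) (Qm u).
Proof. by rewrite /GRing.comm !QmM addrC. Qed.

Lemma sc_comm c (A : MM) : GRing.comm (sc c) A.
Proof. by rewrite /GRing.comm !mulE scalar_mxC. Qed.

Lemma scM c d : sc c * sc d = sc (c * d).
Proof. by rewrite mulE /sc scalar_mxM. Qed.

Lemma scX c m : sc c ^+ m = sc (c ^+ m).
Proof. elim: m => [|m IH]; first by rewrite !expr0. by rewrite !exprS IH scM. Qed.

Lemma sc1 : sc 1 = 1. Proof. by []. Qed.
Lemma sc0 : sc 0 = 0.
Proof. by apply/matrixP => i j; rewrite !mxE mul0rn. Qed.

Lemma lee_sc (c d : S) : nnv c <= nnv d -> lee (sc c) (sc d).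
Proof.
move=> h; apply/matrixP => i j; rewrite !mxE.
by case: (i == j); rewrite ?mulr1n ?mulr0n ?addr0 //; apply/nn_leeP.
Qed.

Definition Acomp (a : I -> S) t : MM := sc (a t) * Qm t.
Definition Amat (a : I -> S) : MM := \sum_t Acomp a t.

Lemma scQM c d t u : (sc c * Qm t) * (sc d * Qm u) = sc (c * d) * Qm (t + u).
Proof.
rewrite -mulrA [Qm t * (sc d * Qm u)]mulrA -(sc_comm d (Qm t)) -mulrA mulrA.
by rewrite scM QmM.
Qed.

Lemma Acomp_comm a b t u : GRing.comm (Acomp a t) (Acomp b u).
Proof. by rewrite /GRing.comm /Acomp !scQM mulrC addrC. Qed.

Lemma Amat_comm a b : GRing.comm (Amat a) (Amat b).
Proof.
apply/commr_sum => t _; apply/esym/commr_sum => u _; exact: Acomp_comm.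
Qed.

Lemma Acomp_Amat_comm a b t : GRing.comm (Acomp a t) (Amat b).
Proof. by apply/commr_sum => u _; exact: Acomp_comm. Qed.

Lemma Qm_Amat_comm a t : GRing.comm (Qm t) (Amat a).
Proof.
apply/commr_sum => u _; rewrite /GRing.comm /Acomp mulrA -sc_comm -mulrA Qm_comm.
by rewrite mulrA.
Qed.

Lemma AcompX a t m : Acomp a t ^+ m = sc (a t ^+ m) * Qm (t *+ m).
Proof. by rewrite /Acomp exprMn_comm ?scX ?QmX //; exact: sc_comm. Qed.

Lemma Acomp_le a t : lee (Acomp a t) (Amat a).
Proof. by apply: (lee_sum idm); rewrite mem_index_enum. Qed.

Lemma Amat_mono a b : (forall t, nnv (a t) <= nnv (b t)) -> lee (Amat a) (Amat b).
Proof.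
move=> h; apply: (lee_sum2 idm) => t.
by rewrite /Acomp; apply: lee_mulr; apply: lee_sc.
Qed.

Definition N0 := (n.+1 * n).+1%N.

Section E.
Variable a : I -> S.
Variable k : I.
Hypothesis hk : forall t, nnv (a t) <= nnv (a k).
Definition Lk := Acomp a k.

Lemma core_A : lee (Amat a ^+ N0) (sc (a k ^+ n.+1) * Amat a ^+ (n.+1 * n - n)).
Proof.
have hs : size [seq Acomp a t | t <- index_enum I] = n.+1.
  have -> : index_enum I = enum I by rewrite enumT.
  by rewrite size_map size_enum_ord.
have hsum : \sum_(x <- [seq Acomp a t | t <- index_enum I]) x = Amat a.
  by rewrite big_map.
have := lee_core idm (s := [seq Acomp a t | t <- index_enum I]) (q := n) (z := sc (a k ^+ n.+1)).
rewrite hs hsum; apply.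
- by rewrite -size_eq0 hs.
- by move=> x y /mapP[t _ ->] /mapP[u _ ->]; exact: Acomp_comm.
- move=> x /mapP[t _ ->]; rewrite AcompX mulrn_order Qm0 mulr1; apply: lee_sc.
  rewrite !nnX ler_pXn2r // nnegrE nnp //.
Qed.

Lemma E_step N : (N0 <= N)%N -> Amat a ^+ N.+1 = Lk * Amat a ^+ N.
Proof.
move=> hN; apply: (lee_anti).
- set m := (n.+1 * n)%N.
  have hm : (n <= m)%N by rewrite /m leq_pmull.
  have e1 : N.+1 = (N0 + (N.+1 - N0))%N by rewrite subnKC // ltnW.
  rewrite e1 exprD.
  apply: (lee_trans (lee_mulr _ core_A)).
  have hnN : (n <= N)%N by apply: leq_trans hN; rewrite /N0 -/m ltnW // ltnS.
  have eA : Amat a ^+ N = Amat a ^+ n * Amat a ^+ (N - n) by rewrite -exprD subnKC.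
  have eL : Lk ^+ n.+1 = sc (a k ^+ n.+1) by rewrite /Lk AcompX mulrn_order Qm0 mulr1.
  rewrite -eL -mulrA -exprD.
  have -> : (n.+1 * n - n + (N.+1 - N0))%N = (N - n)%N.
    by move: hN hm; rewrite /N0 -/m; lia.
  rewrite exprS -mulrA; apply: lee_mull; rewrite eA; apply: lee_mulr.
  apply: (lee_expn idm); exact: Acomp_le.
- by rewrite exprS; apply: (lee_mulr); exact: Acomp_le.
Qed.
End E.
End CircS.


Section T.
Variable R : rcfType.
Variable n : nat.
Local Notation S := (nn R).
Local Notation I := 'I_n.+1.
Local Notation MM := 'M[S]_n.+1.
Local Notation VV := 'cV[S]_n.+1.
Let idm := @mx_idem R n.+1 n.+1.
Local Notation sc := (@sc R n).
Local Notation Qm := (@Qm R n).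

Definition lift (r : R) : S := insubd (0 : S) r.
Lemma liftE r : 0 <= r -> nnv (lift r) = r.
Proof. by move=> h; rewrite /lift -[nnv _]/(val _) val_insubd h. Qed.

Definition AttrS (A : MM) (lam : S) (X : VV) :=
  exists t, A ^+ t.+1 *m X = sc lam *m (A ^+ t *m X).

Lemma mulmxE' (A B : MM) (X : VV) : (A * B) *m X = A *m (B *m X).
Proof. by rewrite mulE mulmxA. Qed.

Lemma E_iter (a : I -> S) k (hk : forall t, nnv (a t) <= nnv (a k)) j :
  Amat a ^+ (N0 n + j) = Lk a k ^+ j * Amat a ^+ N0 n.
Proof.
elim: j => [|j IH]; first by rewrite addn0 expr0 mul1r.
by rewrite addnS (E_step hk) ?leq_addr // IH mulrA -exprS.
Qed.

Lemma Amat0 (a : I -> S) k (hk : forall t, nnv (a t) <= nnv (a k)) : a k = 0 -> Amat a = 0.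
Proof.
move=> h0; rewrite /Amat big1 // => t _; rewrite /Acomp.
have -> : a t = 0 by apply: nn_inj; apply/le_anti; rewrite nnp andbT (le_trans (hk t)) // h0.
by rewrite sc0 mul0r.
Qed.

Lemma AttrS0 (A : MM) X : A = 0 -> AttrS A 0 X.
Proof. by move=> ->; exists 0%N; rewrite expr1 sc0 !mul0mx. Qed.

Definition nninv (c : S) : S := lift (nnv c)^-1.
Lemma nninvK (c : S) : c != 0 -> nninv c * c = 1.
Proof.
move=> hc; have hv : nnv c != 0 by apply: contra hc => /eqP h; apply/eqP/nn_inj.
by apply: nn_inj; rewrite nnM liftE ?invr_ge0 ?nnp // mulVf.
Qed.

Lemma sc_cancel (c : S) (Y Z : VV) : c != 0 -> sc c *m Y = sc c *m Z -> Y = Z.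
Proof.
move=> hc h; have := congr1 (mulmx (sc (nninv c))) h.
by rewrite !mulmxA -!mulE scM nninvK // sc1 !mul1mx.
Qed.

Lemma Lk_cancel (a : I -> S) k j (Y Z : VV) : a k != 0 -> Lk a k ^+ j *m Y = Lk a k ^+ j *m Z -> Y = Z.
Proof.
move=> hc h.
have hL : (sc (nninv (a k)) * Qm (- k)) * Lk a k = 1.
  by rewrite /Lk /Acomp scQM nninvK // addNr Qm0 sc1 mul1r.
have := congr1 (mulmx ((sc (nninv (a k)) * Qm (- k)) ^+ j)) h.
rewrite !mulmxA -!mulE -exprMn_comm ?hL ?expr1n ?mul1mx //.
by rewrite /GRing.comm /Lk /Acomp !scQM mulrC addrC.
Qed.

Lemma T1S (a : I -> S) k (hk : forall t, nnv (a t) <= nnv (a k)) X :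
  AttrS (Amat a) (a k) X ->
  Amat a ^+ (N0 n).+1 *m X = sc (a k) *m (Amat a ^+ N0 n *m X).
Proof.
move=> [t ht]; case: (leqP t (N0 n)) => htN.
  have e : (N0 n).+1 = (N0 n - t + t.+1)%N by rewrite addnS subnK.
  rewrite e exprD mulmxE' ht mulmxA -mulE -sc_comm mulmxE' [Amat a ^+ (N0 n - t) *m _]mulmxA -mulE -exprD.
  by rewrite subnK.
have [/eqP h0|h0] := boolP (a k == 0).
  by rewrite h0 (Amat0 hk h0) expr0n /= sc0 !mul0mx.
have [j ej] : exists j, t = (N0 n + j)%N by exists (t - N0 n)%N; rewrite subnKC // ltnW.
rewrite {}ej in ht.
have e : forall m, Amat a ^+ (m + j).+1 = Amat a ^+ (m + j) * Amat a.
  by move=> m; rewrite exprSr.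
move: ht; rewrite e (E_iter hk j) -mulrA -exprSr !mulmxE'.
rewrite [sc _ *m _]mulmxA -mulE sc_comm mulmxE'.
by apply: Lk_cancel.
Qed.

Lemma commV (A B : MM) (Z : VV) : GRing.comm A B -> A *m (B *m Z) = B *m (A *m Z).
Proof. by move=> h; rewrite !mulmxA -!mulE h. Qed.

Lemma scAmat c (b : I -> S) : sc c * Amat b = Amat (fun t => c * b t).
Proof. by rewrite /Amat mulr_sumr; apply: eq_bigr => t _; rewrite /Acomp mulrA scM. Qed.

Lemma T2S (a b : I -> S) k (hka : forall t, nnv (a t) <= nnv (a k))
  (hkb : forall t, nnv (b t) <= nnv (b k)) (c : S)
  (hc : forall t, nnv (c * b t) <= nnv (a t)) (hck : c * b k = a k) X :
  AttrS (Amat b) (b k) X -> AttrS (Amat a) (a k) X.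
Proof.
move=> hB.
have [/eqP h0|h0] := boolP (a k == 0).
  by rewrite h0; apply: AttrS0; exact: (Amat0 hka h0).
have hb0 : b k != 0 by apply: contra h0 => /eqP h; rewrite -hck h mulr0.
have h1 := T1S hkb hB; rewrite (E_step hkb (leqnn _)) mulmxE' in h1.
set Y := Amat b ^+ N0 n *m X in h1.
have hY : Qm k *m Y = Y.
  by apply: (sc_cancel hb0); rewrite -h1 /Lk /Acomp mulmxE'.
have hLc : Lk a k = Acomp (fun t => c * b t) k by rewrite /Lk /Acomp hck.
have key : Amat a ^+ (N0 n + N0 n) = Amat a ^+ N0 n * (sc c * Amat b) ^+ N0 n.
  apply: lee_anti.
  - have cLA : GRing.comm (Lk a k ^+ N0 n) (Amat a ^+ N0 n).
      by apply/commrX/esym/commrX/esym; exact: Acomp_Amat_comm.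
    rewrite (E_iter hka) cLA; apply: lee_mull; apply: (lee_expn idm).
    by rewrite scAmat hLc; exact: Acomp_le.
  - rewrite exprD; apply: lee_mull; apply: (lee_expn idm); rewrite scAmat.
    by apply: Amat_mono.
exists (N0 n + N0 n)%N.
rewrite (E_step hka) ?leq_addr // mulmxE' key mulmxE'.
rewrite exprMn_comm; last exact: sc_comm.
rewrite scX mulmxE' -/Y /Lk /Acomp mulmxE'; congr (_ *m _).
rewrite (commV (A := Qm k) (B := Amat a ^+ N0 n)); last first.
  by apply/commrX; exact: Qm_Amat_comm.
rewrite (commV (A := Qm k) (B := sc _)) ?hY //.
by rewrite /GRing.comm sc_comm.
Qed.
End T.


Section B.
Variable R : rcfType.
Variable n : nat.
Local Notation S := (nn R).
Local Notation I := 'I_n.+1.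
Local Notation MM := 'M[S]_n.+1.
Local Notation VV := 'cV[S]_n.+1.
Local Notation sc := (@sc R n).
Local Notation Qm := (@Qm R n).

Definition vmx m1 m2 (M : 'M[S]_(m1, m2)) : 'M[R]_(m1, m2) := map_mx (@nnv R) M.

Lemma vmx_inj m1 m2 (M N : 'M[S]_(m1, m2)) : vmx M = vmx N -> M = N.
Proof.
move=> h; apply/matrixP => i j; apply: nn_inj.
by have /matrixP/(_ i j) := h; rewrite !mxE.
Qed.

Lemma nnv_sum (J : Type) (r : seq J) (P : pred J) (F : J -> S) :
  nnv (\sum_(j <- r | P j) F j) = \big[Num.max/0]_(j <- r | P j) nnv (F j).
Proof. by apply: (big_morph (@nnv R) (@nnD R) (@nn0E R)). Qed.

Lemma vmx_mul (A B : MM) : mmul (vmx A) (vmx B) = vmx (A * B).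
Proof.
apply/matrixP => i j; rewrite /mmul mulE !mxE nnv_sum.
by apply: eq_bigr => l _; rewrite !mxE.
Qed.

Lemma vmx_mulv (A : MM) (X : VV) : mmulv (vmx A) (vmx X) = vmx (A *m X).
Proof.
apply/matrixP => i j; rewrite /mmulv !mxE nnv_sum (ord1 j).
by apply: eq_bigr => l _; rewrite !mxE.
Qed.

Lemma vmx1 : vmx (1 : MM) = 1%:M.
Proof. by apply/matrixP => i j; rewrite !mxE; case: (i == j). Qed.

Lemma mpow_vmx (A : MM) t : mpow (vmx A) t = vmx (A ^+ t).
Proof.
elim: t => [|t IH]; first by rewrite expr0 vmx1.
by rewrite /mpow iterS -/(mpow _ _) IH vmx_mul exprS.
Qed.

Lemma vmx_sc c (V : VV) : vmx (sc c *m V) = nnv c *: vmx V.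
Proof.
by apply/matrixP => i j; rewrite /sc mul_scalar_mx !mxE.
Qed.

Lemma val_sub (i j : I) : nat_of_ord (j - i) = ((j + n.+1 - i) %% n.+1)%N.
Proof.
rewrite /= modnDmr addnBA //; exact: ltnW.
Qed.

Definition aS (a : nat -> R) : I -> S := fun t => lift (a t).

Lemma Amat_entry (b : I -> S) i j : Amat b i j = b (j - i).
Proof.
rewrite /Amat summxE (bigD1 (j - i)) //= big1 => [|t ht].
  by rewrite /Acomp mulE mul_scalar_mx !mxE eqxx mulr1 addr0.
by rewrite /Acomp mulE mul_scalar_mx !mxE eq_sym (negbTE ht) mulr0.
Qed.

Lemma Circ_vmx (a : nat -> R) : (forall t, (t < n.+1)%N -> 0 <= a t) ->
  Circ n.+1 a = vmx (Amat (aS a)).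
Proof.
move=> ha; apply/matrixP => i j; rewrite !mxE Amat_entry /aS liftE val_sub //.
by apply: ha; rewrite ltn_mod.
Qed.

Lemma vmx_lift (x : 'cV[R]_n.+1) : (forall i, 0 <= x i 0) -> vmx (map_mx (@lift R) x) = x.
Proof. by move=> hx; apply/matrixP => i j; rewrite !mxE (ord1 j) liftE. Qed.

End B.


Section L.
Variable R : rcfType.

Lemma bmax_le (J : Type) (r : seq J) (P : pred J) (F : J -> R) c :
  0 <= c -> (forall j, P j -> F j <= c) -> \big[Num.max/0]_(j <- r | P j) F j <= c.
Proof. by move=> h0 h; elim/big_ind: _ => // x y hx hy; rewrite ge_max hx hy. Qed.

Lemma le_bmax (J : finType) (P : pred J) (F : J -> R) j0 :
  P j0 -> F j0 <= \big[Num.max/0]_(j | P j) F j.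
Proof. by move=> h; rewrite (bigD1 j0) //= le_max lexx. Qed.

Lemma bmax_ge0 (J : Type) (r : seq J) (P : pred J) (F : J -> R) :
  0 <= \big[Num.max/0]_(j <- r | P j) F j.
Proof.
elim: r => [|x r IH]; rewrite ?big_nil ?big_cons //.
by case: (P x) => //; rewrite le_max IH orbT.
Qed.

Lemma rootr_spec k (y : R) : 0 <= y -> 0 <= rootr k y /\ rootr k y ^+ k.+1 = y.
Proof.
move=> hy; have := xchooseP (rootr_subproof k y).
rewrite -/(rootr k y); move: (rootr k y) => r /andP[h1 h2].
by rewrite hy in h2; split => //; apply/eqP.
Qed.

Variable n : nat.

Lemma Circ_entry (a : nat -> R) (i j : 'I_n.+1) : Circ n.+1 a i j = a (j - i)%R.
Proof. by rewrite mxE val_sub. Qed.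

Lemma lambda_circ (a : nat -> R) k : (k < n.+1)%N ->
  (forall t, (t < n.+1)%N -> 0 <= a t /\ a t <= a k) -> lambda (Circ n.+1 a) = a k.
Proof.
move=> hk ha.
have hA : forall i j : 'I_n.+1, 0 <= Circ n.+1 a i j /\ Circ n.+1 a i j <= a k.
  by move=> i j; rewrite Circ_entry; apply: ha.
have hk0 : 0 <= a k by case: (ha k hk).
apply/le_anti/andP; split.
  apply: bmax_le => // k' _; apply: bmax_le => // s _.
  set P := \prod_(i < k'.+1) _.
  have hP0 : 0 <= P by apply: prodr_ge0 => i _; case: (hA (tnth s i) (tnth s (ordS i))).
  have [hr0 hr] := rootr_spec k' hP0.
  rewrite -(ler_pXn2r (ltn0Sn k')) ?nnegrE // hr.
  have -> : a k ^+ k'.+1 = \prod_(i < k'.+1) a k by rewrite prodr_const card_ord.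
  by apply: ler_prod => i _; apply/andP; apply: hA.
pose ko : 'I_n.+1 := inord k.
have hko : nat_of_ord ko = k by rewrite inordK.
have exP : exists L, (0 < L)%N && (ko *+ L == 0) by exists n.+1; rewrite mulrn_order eqxx.
case: (ex_minnP exP) => L /andP[L0 /eqP hL] Lmin.
have hLn : (L <= n.+1)%N by apply: Lmin; rewrite mulrn_order eqxx.
case: L L0 hL Lmin hLn => [//|k'] _ hL Lmin hLn.
have hmod : forall m, ko *+ (m %% k'.+1) = ko *+ m.
  by move=> m; rewrite {2}(divn_eq m k'.+1) mulrnDr mulnC mulrnA hL mul0rn add0r.
pose s := mktuple (fun i : 'I_k'.+1 => ko *+ i).
have us : uniq s.
  rewrite /s /mktuple /= map_inj_uniq ?val_ord_tuple ?enum_uniq //.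
  move=> i j hij; apply/eqP; apply: contraT => hne.
  wlog lij : i j hij hne / (i < j)%N.
    move=> W; case: (ltngtP i j) => h; first exact: W h.
    - by apply: (W j i) => //; rewrite eq_sym.
    - by move: hne; rewrite (val_inj h) eqxx.
  have : ko *+ (j - i) = 0 by rewrite mulrnBr ?hij ?subrr // ltnW.
  move/eqP => h; have := Lmin (j - i)%N; rewrite subn_gt0 lij h => /(_ isT).
  by move: (ltn_ord j); lia.
rewrite /lambda (bigD1 (Ordinal hLn)) //= le_max; apply/orP; left.
rewrite (bigD1 s) //= le_max; apply/orP; left.
have -> : \prod_(i < k'.+1) Circ n.+1 a (tnth s i) (tnth s (ordS i)) = a k ^+ k'.+1.
  rewrite -[in RHS](card_ord k'.+1) -prodr_const; apply: eq_bigr => i _.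
  rewrite Circ_entry !tnth_mktuple [X in ko *+ X](_ : _ = (i.+1 %% k'.+1)%N) //.
  by rewrite hmod mulrS addrK hko.

have [hr0 hr] := rootr_spec k' (exprn_ge0 k'.+1 hk0).
rewrite le_eqVlt; apply/orP; left; apply/eqP/esym.
by apply: (pexpIrn (ltn0Sn k')); rewrite ?nnegrE.
Qed.
End L.


Section C.
Variable R : rcfType.
Variable n : nat.
Local Notation p := n.+1.
Variable x : 'cV[R]_p.
Hypothesis hx : forall i, 0 <= x i 0.

Lemma maxdiff (J : finType) (u w : J -> R) r : 0 <= r -> (forall j, `|u j - w j| <= r) ->
  `|\big[Num.max/0]_j u j - \big[Num.max/0]_j w j| <= r.
Proof.
move=> hr h.
have H : forall (u w : J -> R), (forall j, `|u j - w j| <= r) ->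
    \big[Num.max/0]_j u j <= \big[Num.max/0]_j w j + r.
  move=> u' w' h'; apply: bmax_le => [|j _].
    by apply: addr_ge0 => //; exact: bmax_ge0.
  have := h' j; rewrite ler_norml => /andP[_ h2].
  have := le_bmax w' (P := xpredT) (j0 := j) isT; lra.
have h1 := H u w h.
have h2 := H w u (fun j => ltac:(by rewrite distrC; exact: h j)).
by rewrite ler_norml; apply/andP; split; lra.
Qed.

Definition yv (a : nat -> R) N := mmulv (mpow (Circ p a) N) x.

Lemma yv_rec a N : (forall t, (t < p)%N -> 0 <= a t) ->
  yv a N.+1 = mmulv (Circ p a) (yv a N).
Proof.
move=> ha; rewrite /yv (Circ_vmx ha) -(vmx_lift hx) !mpow_vmx !vmx_mulv exprS.
by rewrite mulmxE'.
Qed.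

Lemma yv0 a : yv a 0 = x.
Proof.
by rewrite /yv -(vmx_lift hx) /mpow /= -(vmx1 R n) vmx_mulv mul1mx.
Qed.

Lemma mmulv_lip (A B : 'M[R]_p) (y z : 'cV[R]_p) M Yb e d :
  (forall i j, 0 <= A i j <= M) -> (forall i j, 0 <= B i j) ->
  (forall i j, `|A i j - B i j| <= e) -> (forall j, 0 <= z j 0 <= Yb) ->
  (forall j, `|y j 0 - z j 0| <= d) -> 0 <= e -> 0 <= d ->
  forall i, `|mmulv A y i 0 - mmulv B z i 0| <= M * d + Yb * e.
Proof.
move=> hA hB hAB hz hyz he hd i; rewrite !mxE.
have hM : 0 <= M by case/andP: (hA i i) => h1 h2; apply: le_trans h2.
have hY : 0 <= Yb by case/andP: (hz i) => h1 h2; apply: le_trans h2.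
apply: maxdiff => [|j]; first by apply: addr_ge0; apply: mulr_ge0.
have -> : A i j * y j 0 - B i j * z j 0 = A i j * (y j 0 - z j 0) + (A i j - B i j) * z j 0 by ring.
apply: le_trans (ler_normD _ _) _; apply: lerD; rewrite normrM.
  case/andP: (hA i j) => h1 h2; apply: ler_pM => //; by rewrite ?ger0_norm.
case/andP: (hz j) => h1 h2; rewrite mulrC (ger0_norm h1); apply: ler_pM => //.
Qed.

Lemma mmulv_bound (A : 'M[R]_p) (y : 'cV[R]_p) M Yb :
  (forall i j, 0 <= A i j <= M) -> (forall j, 0 <= y j 0 <= Yb) -> 0 <= M -> 0 <= Yb ->
  forall i, 0 <= mmulv A y i 0 <= M * Yb.
Proof.
move=> hA hy hM hY i; rewrite !mxE bmax_ge0 /=.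
apply: bmax_le => [|j _]; first exact: mulr_ge0.
by case/andP: (hA i j) => h1 h2; case/andP: (hy j) => h3 h4; apply: ler_pM.
Qed.

Lemma y_close (a b : nat -> R) M Xb e :
  (forall t, (t < p)%N -> 0 <= a t <= M) -> (forall t, (t < p)%N -> 0 <= b t <= M) ->
  1 <= M -> 0 <= e -> (forall t, (t < p)%N -> `|a t - b t| <= e) ->
  (forall i, x i 0 <= Xb) ->
  forall N i, 0 <= yv b N i 0 <= M ^+ N * Xb /\
              `|yv a N i 0 - yv b N i 0| <= N%:R * M ^+ N * Xb * e.
Proof.
move=> ha hb hM he hab hX.
have hXb : 0 <= Xb by apply: le_trans (hX ord0); exact: hx.
have ha0 : forall t, (t < p)%N -> 0 <= a t by move=> t /ha /andP[].
have hb0 : forall t, (t < p)%N -> 0 <= b t by move=> t /hb /andP[].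
have hM0 : 0 <= M by lra.
have hCa : forall i j, 0 <= Circ p a i j <= M by move=> i j; rewrite Circ_entry; apply: ha.
have hCb : forall i j, 0 <= Circ p b i j <= M by move=> i j; rewrite Circ_entry; apply: hb.
elim=> [|N IH] i.
  rewrite !yv0 expr0 mul1r subrr normr0 mul0r mul0r hx hX; by rewrite mul0r.
have hyb : forall j, 0 <= yv b N j 0 <= M ^+ N * Xb by move=> j; case: (IH j).
have hd : 0 <= N%:R * M ^+ N * Xb * e.
  by apply: mulr_ge0 => //; apply: mulr_ge0 => //; apply: mulr_ge0; rewrite ?exprn_ge0.
rewrite !yv_rec //; split.
  rewrite exprS -mulrA; apply: mmulv_bound => //; exact: mulr_ge0 (exprn_ge0 _ _) _.
apply: le_trans (mmulv_lip hCa (fun i j => proj1 (andP (hCb i j))) _ hyb _ he hd i) _.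
- move=> i' j'; rewrite !Circ_entry; apply: hab; exact: ltn_ord.
- by move=> j; case: (IH j).
set K := M ^+ N * Xb * e.
have hK : 0 <= K by rewrite /K; apply: mulr_ge0 => //; exact: mulr_ge0 (exprn_ge0 _ _) _.
have -> : M * (N%:R * M ^+ N * Xb * e) + M ^+ N * Xb * e = N%:R * M * K + K by rewrite /K; ring.
have -> : N.+1%:R * M ^+ N.+1 * Xb * e = N%:R * M * K + M * K by rewrite /K exprS mulrS; ring.
by apply: lerD => //; apply: ler_peMl.
Qed.
End C.


Section F.
Variable R : rcfType.

Lemma intv_le (lo hi : R) lc rc a : in_intv lo hi lc rc a -> lo <= a /\ a <= hi.
Proof.
rewrite /in_intv => /andP[h1 h2]; split.
  by case: lc h1 => // /ltW.
by case: rc h2 => // /ltW.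
Qed.

Lemma lo_ge0 (lo hi : R) lc rc : (exists a, in_intv lo hi lc rc a) ->
  (forall a, in_intv lo hi lc rc a -> 0 <= a) -> 0 <= lo.
Proof.
move=> [a ha] hp; have [h1 h2] := intv_le ha.
case: lc ha hp => ha hp.
  apply: hp; rewrite /in_intv lexx /=; move: ha; rewrite /in_intv => /andP[_].
  by case: rc => h; [exact: le_trans h1 h | exact: le_lt_trans h1 h].
rewrite leNgt; apply/negP => hlo.
pose b := (lo + Num.min 0 a) / 2.
move: ha; rewrite /in_intv /= => /andP[hla hah].
have hm : lo < Num.min 0 a by rewrite lt_min hlo hla.
have hmin1 : Num.min 0 a <= 0 by rewrite ge_min lexx.
have hmin2 : Num.min 0 a <= a by rewrite ge_min lexx orbT.
have hb : in_intv lo hi false rc b.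
  rewrite /in_intv /=; apply/andP; split; first by rewrite /b; lra.
  move: hah; case: rc hp => hp hah; rewrite /b; lra.
have := hp b hb; rewrite /b; lra.
Qed.

Lemma intv_conv (lo hi : R) lc rc m e : in_intv lo hi lc rc m -> 0 < e -> e <= 1 ->
  in_intv lo hi lc rc ((1 - e) * lo + e * m) /\ in_intv lo hi lc rc ((1 - e) * hi + e * m).
Proof.
move=> hm he1 he2; have [h1 h2] := intv_le hm.
move: hm; rewrite /in_intv => /andP[hl hr].
have E1 : (1 - e) * lo + e * m - lo = e * (m - lo) by ring.
have E2 : (1 - e) * lo + e * m - m = (1 - e) * (lo - m) by ring.
have E3 : (1 - e) * hi + e * m - hi = e * (m - hi) by ring.
have E4 : (1 - e) * hi + e * m - m = (1 - e) * (hi - m) by ring.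
have P1 : 0 <= e * (m - lo) by apply: mulr_ge0; lra.
have P2 : (1 - e) * (lo - m) <= 0 by apply: mulr_ge0_le0; lra.
have P3 : e * (m - hi) <= 0 by apply: mulr_ge0_le0; lra.
have P4 : 0 <= (1 - e) * (hi - m) by apply: mulr_ge0; lra.
split; apply/andP; split.
- case: lc hl => hl //; first lra.
  have : 0 < e * (m - lo) by apply: mulr_gt0; lra.
  lra.
- case: rc hr => hr; lra.
- case: lc hl => hl; lra.
- case: rc hr => hr; first lra.
  have : e * (m - hi) < 0 by rewrite pmulr_rlt0; lra.
  lra.
Qed.

Lemma argmax_ex (a : nat -> R) n : exists k, (k < n.+1)%N /\ forall t, (t < n.+1)%N -> a t <= a k.
Proof.
elim: n => [|n [k [hk IH]]]; first by exists 0%N; split => // t; rewrite ltnS leqn0 => /eqP ->.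
case: (leP (a n.+1) (a k)) => h.
  exists k; split; first by apply: leq_trans hk _.
  move=> t; rewrite ltnS leq_eqVlt => /orP[/eqP ->//|]; exact: IH.
exists n.+1; split => // t; rewrite ltnS leq_eqVlt => /orP[/eqP ->//|/IH ht].
by apply: le_trans ht _; apply: ltW.
Qed.

Lemma bmax_arg (a : nat -> R) n k : (k < n.+1)%N -> (forall t, (t < n.+1)%N -> 0 <= a t /\ a t <= a k) ->
  \big[Num.max/0]_(t < n.+1) a t = a k.
Proof.
move=> hk ha; apply/le_anti/andP; split.
  apply: bmax_le => [|t _]; first by case: (ha k hk).
  by case: (ha t (ltn_ord t)).
exact: (le_bmax (fun t : 'I_n.+1 => a t) (P := xpredT) (j0 := Ordinal hk) isT).
Qed.

Lemma small_zero (F C : R) : 0 <= C -> (forall e, 0 < e -> e <= 1 -> `|F| <= e * C) -> F = 0.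
Proof.
move=> hC h; apply/eqP; apply: contraT => hF.
have hf : 0 < `|F| by rewrite normr_gt0.
set f := `|F| in hf h.
pose e := f / (C + f).
have hs : 0 < C + f by lra.
have he : e * (C + f) = f by rewrite /e divfK // gt_eqF.
have he0 : 0 < e by rewrite /e divr_gt0.
have he1 : e <= 1 by rewrite /e ler_pdivrMr // mul1r; lra.
have := h e he0 he1.
have : 0 < e * f by apply: mulr_gt0.
rewrite mulrDr in he; lra.
Qed.
End F.


Section G.
Variable R : rcfType.
Variable n : nat.
Local Notation p := n.+1.
Variable x : 'cV[R]_p.
Hypothesis hx : forall i, 0 <= x i 0.

Lemma yv_vmx (a : nat -> R) N : (forall t, (t < p)%N -> 0 <= a t) ->
  yv x a N = vmx (Amat (aS a) ^+ N *m map_mx (@lift R) x).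
Proof. by move=> ha; rewrite /yv (Circ_vmx ha) -{1}(vmx_lift hx) mpow_vmx vmx_mulv. Qed.

Lemma attr_eqN0 (a : nat -> R) k (hk : (k < p)%N) :
  (forall t, (t < p)%N -> 0 <= a t /\ a t <= a k) ->
  Attr (Circ p a) x <-> yv x a (N0 n).+1 = a k *: yv x a (N0 n).
Proof.
move=> ha.
have ha0 : forall t, (t < p)%N -> 0 <= a t by move=> t /ha [].
have hk0 : 0 <= a k by case: (ha k hk).
pose kk := Ordinal hk.
have hS : forall t : 'I_p, nnv (aS a t) <= nnv (aS a kk).
  by move=> t; rewrite /aS !liftE //; [case: (ha t (ltn_ord t)) | apply: ha0].
have hsc : forall N, a k *: yv x a N = vmx (sc n (aS a kk) *m (Amat (aS a) ^+ N *m map_mx (@lift R) x)).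
  by move=> N; rewrite vmx_sc /aS /= liftE // yv_vmx.
split.
  move=> [_ [t ht]]; rewrite hsc yv_vmx //; congr vmx; apply: T1S => //.
  exists t; apply: vmx_inj; rewrite -hsc -yv_vmx //.
  by move: ht; rewrite (lambda_circ hk ha).
move=> h; split => //; exists (N0 n).
by rewrite (lambda_circ hk ha).
Qed.

Lemma attrS_iff (a : nat -> R) k (hk : (k < p)%N) :
  (forall t, (t < p)%N -> 0 <= a t /\ a t <= a k) ->
  Attr (Circ p a) x <-> AttrS (Amat (aS a)) (aS a (Ordinal hk)) (map_mx (@lift R) x).
Proof.
move=> ha.
have ha0 : forall t, (t < p)%N -> 0 <= a t by move=> t /ha [].
have hk0 : 0 <= a k by case: (ha k hk).
have hsc : forall N, a k *: yv x a N = vmx (sc n (aS a (Ordinal hk)) *m (Amat (aS a) ^+ N *m map_mx (@lift R) x)).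
  by move=> N; rewrite vmx_sc /aS /= liftE // yv_vmx.
rewrite /Attr (lambda_circ hk ha); split.
  move=> [_ [t ht]]; exists t; apply: vmx_inj; rewrite -hsc -yv_vmx //.
move=> [t ht]; split => //; exists t.
have := congr1 (@vmx R _ _) ht; rewrite -hsc -yv_vmx //.
Qed.

Lemma limit_lemma (v m : nat -> R) N :
  (forall t, (t < p)%N -> 0 <= v t) -> (forall t, (t < p)%N -> 0 <= m t) ->
  (forall e, 0 < e -> e <= 1 ->
     yv x (fun t => (1 - e) * v t + e * m t) N.+1 =
     (\big[Num.max/0]_(t < p) ((1 - e) * v t + e * m t)) *: yv x (fun t => (1 - e) * v t + e * m t) N) ->
  yv x v N.+1 = (\big[Num.max/0]_(t < p) v t) *: yv x v N.
Proof.
move=> hv hm H; apply/matrixP => i j; rewrite (ord1 j) [in RHS]mxE.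
set D := \sum_(t < p) (v t + m t).
have hvD : forall t, (t < p)%N -> v t + m t <= D.
  move=> t ht; rewrite /D (bigD1 (Ordinal ht)) //= lerDl.
  by apply: sumr_ge0 => u _; apply: addr_ge0; [apply: hv | apply: hm].
have hD : 0 <= D by apply: le_trans (hvD 0%N isT); apply: addr_ge0; [apply: hv | apply: hm].
set M := 1 + D.
set Xb := \sum_(u < p) x u 0.
have hX : forall u, x u 0 <= Xb.
  by move=> u; rewrite /Xb (bigD1 u) //= lerDl; apply: sumr_ge0 => w _.
have hXb : 0 <= Xb by apply: le_trans (hX ord0).
set lv := \big[Num.max/0]_(t < p) v t.
have hlv : 0 <= lv <= M.
  rewrite bmax_ge0 /=; apply: bmax_le => [|t _]; first by rewrite /M; lra.
  have := hvD t (ltn_ord t); have := hm t (ltn_ord t); rewrite /M; lra.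
set B := M ^+ N * Xb.
pose C := N.+1%:R * M ^+ N.+1 * Xb * D + M * (N%:R * M ^+ N * Xb * D) + B * D.
apply/eqP; rewrite -subr_eq0; apply/eqP.
apply: (@small_zero _ _ C).
  have h1 : 0 <= M ^+ N by apply: exprn_ge0; rewrite /M; lra.
  have h2 : 0 <= M ^+ N.+1 by apply: exprn_ge0; rewrite /M; lra.
  rewrite /C /B; apply: addr_ge0; first apply: addr_ge0.
  - by do 3!apply: mulr_ge0 => //.
  - by apply: mulr_ge0; [rewrite /M; lra | do 3!apply: mulr_ge0 => //].
  - by do 2!apply: mulr_ge0 => //.
move=> e he0 he1.
set ee := fun t => (1 - e) * v t + e * m t.
have hee : forall t, (t < p)%N -> 0 <= ee t <= M.
  move=> t ht; have := hv t ht; have := hm t ht; have := hvD t ht.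
  have : 0 <= e * v t <= v t.
    by apply/andP; split; [apply: mulr_ge0; [lra | exact: hv] | apply: ler_piMl; [exact: hv | lra]].
  have : 0 <= e * m t <= m t.
    by apply/andP; split; [apply: mulr_ge0; [lra | exact: hm] | apply: ler_piMl; [exact: hm | lra]].
  rewrite /ee /M; move=> /andP[? ?] /andP[? ?] ? ? ?.
  have -> : (1 - e) * v t + e * m t = v t - e * v t + e * m t by ring.
  lra.
have hvv : forall t, (t < p)%N -> 0 <= v t <= M.
  move=> t ht; have := hv t ht; have := hm t ht; have := hvD t ht; rewrite /M; lra.
have hab : forall t, (t < p)%N -> `|v t - ee t| <= e * D.
  move=> t ht; have -> : v t - ee t = e * (v t - m t) by rewrite /ee; ring.
  rewrite normrM gtr0_norm //; apply: ler_wpM2l; first lra.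
  apply: le_trans (hvD t ht); rewrite ler_norml; have := hv t ht; have := hm t ht; lra.
have heD : 0 <= e * D by apply: mulr_ge0 => //; lra.
have hM1 : 1 <= M by rewrite /M; lra.
have [_ T1] := y_close hx hvv hee hM1 heD hab hX N.+1 i.
have [T3 T2] := y_close hx hvv hee hM1 heD hab hX N i.
have T4 : `|lv - \big[Num.max/0]_(t < p) ee t| <= e * D.
  by apply: maxdiff => // t; apply: hab.
have HH := H e he0 he1; have /matrixP/(_ i 0) := HH; rewrite [in RHS]mxE -/ee => He.
rewrite -/(yv x ee N.+1) -/(yv x ee N) in He.
set le' := \big[Num.max/0]_(t < p) ee t in T4 He.
set yv1 := yv x v N.+1 i 0 in T1 *; set ye1 := yv x ee N.+1 i 0 in T1 He.
set yv0' := yv x v N i 0 in T2 *; set ye0 := yv x ee N i 0 in T2 T3 He.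
have -> : yv1 - lv * yv0' = (yv1 - ye1) - (lv * (yv0' - ye0) + (lv - le') * ye0) by rewrite He; ring.
apply: le_trans (ler_normB _ _) _; apply: le_trans (lerD (lexx _) (ler_normD _ _)) _.
rewrite !normrM (ger0_norm (proj1 (andP hlv))) (ger0_norm (proj1 (andP T3))).
have Q1 : lv * `|yv0' - ye0| <= M * (N%:R * M ^+ N * Xb * (e * D)).
  by apply: ler_pM => //; case/andP: hlv.
have Q2 : `|lv - le'| * ye0 <= (e * D) * B.
  by apply: ler_pM => //; case/andP: T3.
have -> : e * C = N.+1%:R * M ^+ N.+1 * Xb * (e * D) + M * (N%:R * M ^+ N * Xb * (e * D)) + (e * D) * B.
  by rewrite /C; ring.
lra.
Qed.
End G.


Lemma ratio_le (R : rcfType) (ak hk lt at_ : R) : 0 <= lt -> lt <= at_ -> 0 <= ak -> ak <= hk ->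
  (ak / hk) * lt <= at_.
Proof.
move=> h1 h2 h3 h4; have [->|hk0] := eqVneq hk 0.
  by rewrite invr0 mulr0 mul0r; apply: le_trans h2.
have hp : 0 < hk by rewrite lt_def hk0 (le_trans h3 h4).
apply: le_trans h2; apply: ler_piMl => //.
by rewrite ler_pdivrMr // mul1r.
Qed.

Lemma ratio_eq (R : rcfType) (ak hk : R) : 0 <= ak -> ak <= hk -> (ak / hk) * hk = ak.
Proof.
move=> h3 h4; have [e0|hk0] := eqVneq hk 0.
  by rewrite e0 invr0 mulr0; apply/le_anti; rewrite h3 -e0 h4.
by rewrite divfK.
Qed.

Theorem corollary4 (R : rcfType) (n : nat) (lo hi : nat -> R) (lc rc : nat -> bool)
  (x : 'cV[R]_n)
  (hx : forall i, 0 <= x i 0)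
  (hne : forall t, (t < n)%N -> exists a, in_intv (lo t) (hi t) (lc t) (rc t) a)
  (hpos : forall t, (t < n)%N -> forall a, in_intv (lo t) (hi t) (lc t) (rc t) a -> 0 <= a) :
  (forall a : nat -> R,
      (forall t, (t < n)%N -> in_intv (lo t) (hi t) (lc t) (rc t) (a t)) ->
      Attr (Circ n a) x)
  <->
  (forall k, (k < n)%N -> Attr (Ak n lo hi k) x).
Proof.
case: n x hx hne hpos => [|n] x hx hne hpos.
  split=> [_ k //|_ a _]; split => //; exists 0%N; apply/matrixP => -[] //.
have hlo : forall t, (t < n.+1)%N -> 0 <= lo t.
  by move=> t ht; apply: lo_ge0 (hne t ht) (hpos t ht).
have hlh : forall t, (t < n.+1)%N -> lo t <= hi t.
  by move=> t ht; have [a /intv_le [h1 h2]] := hne t ht; apply: le_trans h2.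
split.
- move=> H k hk; rewrite /Ak.
  set v := fun t => if t == k then hi t else lo t.
  have hv : forall t, (t < n.+1)%N -> 0 <= v t.
    move=> t ht; rewrite /v; case: (t == k); last exact: hlo.
    by apply: le_trans (hlh t ht); apply: hlo.
  have [f hf] := fin_all_exists (fun t : 'I_n.+1 => hne t (ltn_ord t)).
  pose m := fun t => f (inord t).
  have hm : forall t, (t < n.+1)%N -> in_intv (lo t) (hi t) (lc t) (rc t) (m t).
    by move=> t ht; have := hf (inord t); rewrite /m inordK.
  have hm0 : forall t, (t < n.+1)%N -> 0 <= m t by move=> t ht; apply: hpos (hm t ht).
  have [kv [hkv hvmax]] := argmax_ex v n.
  have hvk : forall t, (t < n.+1)%N -> 0 <= v t /\ v t <= v kv.
    by move=> t ht; split; [apply: hv | apply: hvmax].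
  apply/(attr_eqN0 hx hkv hvk); rewrite -(bmax_arg hkv hvk).
  apply: (limit_lemma hx hv hm0) => e he0 he1.
  set ee := fun t => (1 - e) * v t + e * m t.
  have hmem : forall t, (t < n.+1)%N -> in_intv (lo t) (hi t) (lc t) (rc t) (ee t).
    move=> t ht; have [c1 c2] := intv_conv (hm t ht) he0 he1.
    by rewrite /ee /v; case: (t == k).
  have hA := H ee hmem.
  have hee0 : forall t, (t < n.+1)%N -> 0 <= ee t by move=> t ht; apply: hpos (hmem t ht).
  have [ke [hke hemax]] := argmax_ex ee n.
  have hek : forall t, (t < n.+1)%N -> 0 <= ee t /\ ee t <= ee ke.
    by move=> t ht; split; [apply: hee0 | apply: hemax].
  rewrite (bmax_arg hke hek).
  exact: (proj1 (attr_eqN0 hx hke hek) hA).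
- move=> H a ha.
  have ha0 : forall t, (t < n.+1)%N -> 0 <= a t by move=> t ht; apply: hpos (ha t ht).
  have [k [hk hamax]] := argmax_ex a n.
  have hak : forall t, (t < n.+1)%N -> 0 <= a t /\ a t <= a k.
    by move=> t ht; split; [apply: ha0 | apply: hamax].
  have hA := H k hk; rewrite /Ak in hA.
  set v := fun t => if t == k then hi t else lo t in hA.
  have hakhi : a k <= hi k by have [_ ] := intv_le (ha k hk).
  have hvk : forall t, (t < n.+1)%N -> 0 <= v t /\ v t <= v k.
    move=> t ht; rewrite /v eqxx; case: eqP => [->|_]; first by split => //; apply: le_trans hakhi; apply: ha0.
    split; first exact: hlo.
    have [h1 _] := intv_le (ha t ht).
    by apply: le_trans hakhi; apply: le_trans h1 _; apply: hamax.
  move/(attrS_iff hx hk hvk): hA => hA.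
  apply/(attrS_iff hx hk hak).
  have hk0 : 0 <= a k by apply: ha0.
  have hc0 : 0 <= a k / hi k by apply: divr_ge0 => //; apply: le_trans hakhi.
  apply: (T2S (b := aS v) (c := lift (a k / hi k)) _ _ _ _ hA).
  + move=> t; have [h1 h2] := hak t (ltn_ord t); have [h3 _] := hak k hk.
    by rewrite /aS !liftE.
  + move=> t; have [h1 h2] := hvk t (ltn_ord t); have [h3 _] := hvk k hk.
    by rewrite /aS !liftE.
  + move=> t; have [h1 h2] := hvk t (ltn_ord t); have h0 := ha0 t (ltn_ord t).
    rewrite nnM /aS !liftE //.
    rewrite /v; case: eqP => [et|net].
      by rewrite et ratio_eq.
    apply: ratio_le => //; first exact: hlo.
    by have [h5 _] := intv_le (ha t (ltn_ord t)).
  + have [h1 h2] := hvk k hk.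
    apply: nn_inj; rewrite nnM /aS !liftE //=.
    by rewrite /v eqxx ratio_eq.
Qed.
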